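(* Let $G$ be a connected ribbon graph. Then (1) $P_{\langle\delta\rangle}(G,1)=P_{\langle\tau\delta\tau\rangle}(G,1)=2^{e(G)}$, $P_{\langle\delta\tau\rangle}(G,1)=3^{e(G)}$, and $P_{\langle\delta,\tau\rangle}(G,1)=6^{e(G)}$; (2) for each $\bullet\in\{\langle\delta\rangle,\langle\delta\tau\rangle,\langle\tau\delta\tau\rangle,\langle\delta,\tau\rangle\}$ and every $H\in\mathrm{Orb}_\bullet(G)$, $P_\bullet(G,x)=P_\bullet(H,x)$; (3) for each $\bullet\in\{\langle\delta\rangle,\langle\delta\tau\rangle,\langle\tau\delta\tau\rangle,\langle\delta,\tau\rangle\}$, the polynomial $P_\bullet(G,x)$ has minimum degree $1$ and is interpolating, i.e. if its maximum degree is $M$ then the coefficient of $x^k$ is nonzero for every $1\le k\le M$.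
   Context: A ribbon graph $G=(V(G),E(G))$ is a (orientable or non-orientable) surface with boundary, represented as the union of a set $V(G)$ of vertex discs and a set $E(G)$ of edge discs (ribbons) such that vertices and edges intersect in disjoint line segments, each such segment lies on the boundary of exactly one vertex and exactly one edge, and every edge contains exactly two such segments. $v(G)$, $e(G)$ denote the numbers of vertices and edges. For $A\subseteq E(G)$, the partial dual $G^{\delta(A)}$ is obtained by gluing a disc along each boundary component of the spanning ribbon subgraph $(V(G),A)$ (these discs become the vertex discs), removing the interiors of the original vertex discs, and keeping the edge ribbons. The partial Petrial $G^{\tau(A)}$ adds a half-twist to each edge in $A$. For a word $w=w_1\cdots w_n$ over $\{\delta,\tau\}$, $G^{w(A)}=(\cdots(G^{w_n(A)})^{w_{n-1}(A)}\cdots)^{w_1(A)}$ (rightmost letter applied first), $G^{1(A)}=G$, and $G^{\xi(A)\pi(B)}=(G^{\xi(A)})^{\pi(B)}$. Orbits: $\mathrm{Orb}_{\langle\delta\rangle}(G)=\{G^{\delta(A)}:A\subseteq E(G)\}$, $\mathrm{Orb}_{\langle\tau\delta\tau\rangle}(G)=\{G^{\tau\delta\tau(A)}:A\subseteq E(G)\}$, $\mathrm{Orb}_{\langle\delta\tau\rangle}(G)=\{G^{1(A_1)\tau\delta(A_2)\delta\tau(A_3)}\}$ over ordered partitions $(A_1,A_2,A_3)$ of $E(G)$ into pairwise disjoint possibly empty parts, and $\mathrm{Orb}_{\langle\delta,\tau\rangle}(G)=\{G^{1(A_1)\delta(A_2)\tau(A_3)\tau\delta(A_4)\delta\tau(A_5)\tau\delta\tau(A_6)}\}$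 over ordered partitions $(A_1,\dots,A_6)$ of $E(G)$. Vertex polynomials (sums over the same index sets, counted with multiplicity): $P_{\langle\delta\rangle}(G,x)=\sum_{A\subseteq E(G)}x^{v(G^{\delta(A)})}$; $P_{\langle\tau\delta\tau\rangle}(G,x)=\sum_{A\subseteq E(G)}x^{v(G^{\tau\delta\tau(A)})}$; $P_{\langle\delta\tau\rangle}(G,x)=\sum_{(A_1,A_2,A_3)}x^{v(G^{1(A_1)\tau\delta(A_2)\delta\tau(A_3)})}$; $P_{\langle\delta,\tau\rangle}(G,x)=\sum_{(A_1,\dots,A_6)}x^{v(G^{1(A_1)\delta(A_2)\tau(A_3)\tau\delta(A_4)\delta\tau(A_5)\tau\delta\tau(A_6)})}$. *)

(* Defs.v *)
(* Ribbon graphs are encoded combinatorially by their flags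
   (graph-encoded maps / "gems"). *)
From mathcomp Require Import all_boot all_algebra.
Set Implicit Arguments. Unset Strict Implicit. Unset Printing Implicit Defensive.
Import GRing.Theory.
Local Open Scope ring_scope.

(* A flag (corner) of an edge ribbon e : (e, end of the edge, side of the edge). *)
Definition Flag (E : finType) : finType := (E * bool * bool)%type.
Definition fedge (E : finType) (x : Flag E) : E := x.1.1.

(* Raw ribbon graph data with edge set E:
   ra = across the attachment segment (same edge end, other side),
   rb = along an edge side (other end),
   rc = along the vertex-disc boundary arc to the next corner,
   riso = number of isolated vertices (vertex discs with no edge). *)
Record ribgraph (E : finType) := RGraph {
  ra : Flag E -> Flag E;
  rb : Flag E -> Flag E;
  rc : Flag E -> Flag E;
  riso : nat }.

Definition is_ribbon (E : finType) (G : ribgraph E) : Prop :=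
  involutive (ra G) /\ involutive (rb G) /\ involutive (rc G) /\
  (forall x, ra G x != x) /\ (forall x, rb G x != x) /\ (forall x, rc G x != x) /\
  (forall x, fedge (ra G x) = fedge x) /\ (forall x, fedge (rb G x) = fedge x) /\
  (forall x, ra G (rb G x) = rb G (ra G x)) /\ (forall x, ra G (rb G x) != x).

Definition norbits (T : finType) (fs : seq (T -> T)) : nat :=
  n_comp (fun x y : T => has (fun f => y == f x) fs) predT.

(* v(G): vertices = boundary components of vertex discs = <ra,rc>-orbits,
   plus isolated vertices *)
Definition nverts (E : finType) (G : ribgraph E) : nat :=
  norbits [:: ra G; rc G] + riso G.

Definition ncomps (E : finType) (G : ribgraph E) : nat :=
  norbits [:: ra G; rb G; rc G] + riso G.
Definition rconnected (E : finType) (G : ribgraph E) : Prop := ncomps G = 1%N.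

Definition pdual (E : finType) (A : {set E}) (G : ribgraph E) : ribgraph E :=
  RGraph (fun x => if fedge x \in A then rb G x else ra G x)
         (fun x => if fedge x \in A then ra G x else rb G x)
         (rc G) (riso G).

Definition ppetrial (E : finType) (A : {set E}) (G : ribgraph E) : ribgraph E :=
  RGraph (ra G)
         (fun x => if fedge x \in A then ra G (rb G x) else rb G x)
         (rc G) (riso G).

Inductive letter := Ld | Lt.
Definition word := seq letter.

Definition op (E : finType) (l : letter) (A : {set E}) (G : ribgraph E) : ribgraph E :=
  match l with Ld => pdual A G | Lt => ppetrial A G end.

(* G^{w(A)}, rightmost letter applied first *)
Definition applyw (E : finType) (w : word) (A : {set E}) (G : ribgraph E) : ribgraph E :=
  foldr (fun l H => op l A H) G w.

(* G^{w_0(A_0) w_1(A_1) ... } = ((G^{w_0(A_0)})^{w_1(A_1)})... *)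
Definition applyseq (E : finType) (G : ribgraph E) (ps : seq (word * {set E})) : ribgraph E :=
  foldl (fun H p => applyw p.1 p.2 H) G ps.

(* the i-th part of an ordered partition encoded as a colouring f *)
Definition part (E : finType) (n : nat) (f : {ffun E -> 'I_n}) (i : nat) : {set E} :=
  [set e | val (f e) == i].

Definition tdt : word := [:: Lt; Ld; Lt].

Definition orbD (E : finType) (G : ribgraph E) (A : {set E}) := applyw [:: Ld] A G.
Definition orbTDT (E : finType) (G : ribgraph E) (A : {set E}) := applyw tdt A G.
Definition orbDT (E : finType) (G : ribgraph E) (f : {ffun E -> 'I_3}) :=
  applyseq G [:: ([::], part f 0); ([:: Lt; Ld], part f 1); ([:: Ld; Lt], part f 2)].
Definition orbALL (E : finType) (G : ribgraph E) (f : {ffun E -> 'I_6}) :=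
  applyseq G [:: ([::], part f 0); ([:: Ld], part f 1); ([:: Lt], part f 2);
                 ([:: Lt; Ld], part f 3); ([:: Ld; Lt], part f 4); (tdt, part f 5)].

Definition P_D (E : finType) (G : ribgraph E) : {poly int} :=
  \sum_(A : {set E}) 'X^(nverts (orbD G A)).
Definition P_TDT (E : finType) (G : ribgraph E) : {poly int} :=
  \sum_(A : {set E}) 'X^(nverts (orbTDT G A)).
Definition P_DT (E : finType) (G : ribgraph E) : {poly int} :=
  \sum_(f : {ffun E -> 'I_3}) 'X^(nverts (orbDT G f)).
Definition P_ALL (E : finType) (G : ribgraph E) : {poly int} :=
  \sum_(f : {ffun E -> 'I_6}) 'X^(nverts (orbALL G f)).

Definition mindeg1 (p : {poly int}) : Prop := p`_0 = 0 /\ p`_1 != 0.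
Definition interpolating (p : {poly int}) : Prop :=
  forall k : nat, (1 <= k <= (size p).-1)%N -> p`_k != 0.

(* Main.v *)
Require Import Defs.
From mathcomp Require Import all_boot all_algebra zify.
From Stdlib Require Import FunctionalExtensionality.
Notation root := fingraph.root.
Set Implicit Arguments. Unset Strict Implicit. Unset Printing Implicit Defensive.

Lemma ncompE (T : finType) (e : rel T) : n_comp e predT = #|[set x | root e x == x]|.
Proof. by apply: eq_card => x; rewrite !inE /= andbT. Qed.

Lemma ncomp_mono (T : finType) (e e' : rel T) :
  connect_sym e -> connect_sym e' ->
  (forall x y, connect e x y -> connect e' x y) ->
  n_comp e' predT <= n_comp e predT.
Proof.
move=> se se' sub; rewrite !ncompE.
set S := [set x | root e x == x]; set S' := [set x | root e' x == x].
apply: (@leq_trans #|root e' @: S|); last exact: leq_imset_card.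
apply: subset_leq_card; apply/subsetP => r; rewrite inE => /eqP rr.
apply/imsetP; exists (root e r); first by rewrite inE fingraph.root_root.
apply/esym; rewrite -[in RHS]rr; apply/(fingraph.rootP se'); apply: sub; rewrite se; exact: fingraph.connect_root.
Qed.

Lemma ncomp_strict (T : finType) (e e' : rel T) x y :
  connect_sym e -> connect_sym e' ->
  (forall x y, connect e x y -> connect e' x y) ->
  connect e' x y -> ~~ connect e x y ->
  n_comp e' predT < n_comp e predT.
Proof.
move=> se se' sub cxy ncxy; rewrite !ncompE.
set S := [set x | root e x == x]; set S' := [set x | root e' x == x].
have h1 : #|S'| <= #|root e' @: S|.
  apply: subset_leq_card; apply/subsetP => r; rewrite inE => /eqP rr.
  apply/imsetP; exists (root e r); first by rewrite inE fingraph.root_root.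
  apply/esym; rewrite -[in RHS]rr; apply/(fingraph.rootP se'); apply: sub; rewrite se; exact: fingraph.connect_root.
apply: (leq_ltn_trans h1); rewrite ltn_neqAle leq_imset_card andbT.
apply/negP => /imset_injP inj.
have rx : root e x \in S by rewrite inE fingraph.root_root.
have ry : root e y \in S by rewrite inE fingraph.root_root.
have : root e' (root e x) = root e' (root e y).
  apply/(fingraph.rootP se'); apply: (connect_trans _ (connect_trans cxy _)).
    by rewrite se'; apply: sub; exact: fingraph.connect_root.
  by apply: sub; exact: fingraph.connect_root.
move/(inj _ _ rx ry) => /(fingraph.rootP se) => h; by rewrite h in ncxy.
Qed.

Lemma ncomp_add (T : finType) (e e' : rel T) u v :
  connect_sym e -> connect_sym e' ->
  (forall x y, e' x y -> connect e x y ||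
      ((connect e u x || connect e v x) && (connect e u y || connect e v y))) ->
  n_comp e predT <= (n_comp e' predT).+1.
Proof.
move=> se se' hyp.
pose Q x y := connect e x y ||
      ((connect e u x || connect e v x) && (connect e u y || connect e v y)).
have Qt : forall x y z, Q x y -> Q y z -> Q x z.
  move=> x y z; rewrite /Q.
  case/orP=> [cxy|/andP[hx hy]]; case/orP=> [cyz|/andP[hy' hz]].
  - by rewrite (connect_trans cxy cyz).
  - apply/orP; right; rewrite hz andbT.
    have cyx : connect e y x by rewrite se.
    by case/orP: hy' => h; rewrite (connect_trans h cyx) ?orbT.
  - apply/orP; right; rewrite hx /=.
    by case/orP: hy => h; [rewrite (connect_trans h cyz)|rewrite (connect_trans h cyz) orbT].
  - by rewrite hx hz orbT.
have QC : forall x y, connect e' x y -> Q x y.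
  move=> x y /connectP[p pth ->]; elim: p x pth => [|z p IH] x /=.
    by move=> _; rewrite /Q connect0.
  by case/andP => exz /IH; apply: Qt; apply: hyp.
rewrite !ncompE.
set S := [set x | root e x == x]; set S' := [set x | root e' x == x].
have h1 : root e' @: S \subset S'.
  by apply/subsetP => r /imsetP[z _ ->]; rewrite inE fingraph.root_root.
have h2 : #|S :\ root e v| = #|root e' @: (S :\ root e v)|.
  apply/esym/card_in_imset => r1 r2; rewrite !inE => /andP[n1 /eqP e1] /andP[n2 /eqP e2] /eqP.
  rewrite (fingraph.root_connect se') => /QC; case/orP.
    by rewrite -(fingraph.root_connect se) e1 e2 => /eqP.
  case/andP => h3 h4.
  have hh : forall r, root e r = r -> r != root e v -> connect e u r || connect e v r -> r = root e u.
    move=> r er nr; case/orP => c.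
      by rewrite -er; apply/esym/(fingraph.rootP se).
    by move/(fingraph.rootP se): c; rewrite er => c; rewrite c eqxx in nr.
  by rewrite (hh _ e1 n1 h3) (hh _ e2 n2 h4).
have h3 : #|S| <= (#|S :\ root e v|).+1.
  by rewrite (cardsD1 (root e v) S); case: (_ \in S).
apply: (leq_trans h3); rewrite ltnS h2.
apply: (leq_trans _ (subset_leq_card h1)).
by apply: subset_leq_card; apply: imsetS; apply: subsetDl.
Qed.

Lemma walk (T : finType) (al c : T -> T) (R' : rel T) (P : pred T) x :
  involutive al -> involutive c -> (forall y, al y != y) -> (forall y, c y != y) ->
  P x -> (forall y, P y -> P (c y)) -> (forall y, P y -> P (al y)) ->
  (forall y, P y -> R' y (c y)) ->
  (forall y, P y -> y != x -> y != al x -> R' y (al y)) ->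
  connect R' x (al x).
Proof.
move=> ali ci alf cf Px Pc Pal hc hal.
pose w := fun y => al (c y).
have winj : injective w by move=> y1 y2 /(inv_inj ali) /(inv_inj ci).
pose z i := iter i w x.
have zS i : z i.+1 = al (c (z i)) by [].
have Pz i : P (z i) by elim: i => //= i IH; apply: Pal; apply: Pc.
pose Q j := (c (z j) == x) || (c (z j) == al x).
have exQ : exists j, Q j.
  exists (order w x).-1; apply/orP; right; apply/eqP.
  have h : z (order w x) = x by exact: iter_order.
  move: h; case: (order w x) (order_gt0 w x) => // n _.
  by rewrite zS /= => <-; rewrite ali.
case: (ex_minnP exQ) => m Qm minm.
have nQ i : i < m -> ~~ Q i by move=> lt; apply/negP => /minm; rewrite leqNgt lt.
have cA i : i <= m -> connect R' x (z i).
  elim: i => [|i IH] lt; first exact: connect0.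
  have := nQ _ lt; rewrite /Q negb_or => /andP[n1 n2].
  apply: (connect_trans (IH (ltnW lt))); apply: (connect_trans (connect1 (hc _ (Pz i)))).
  by apply: connect1; rewrite zS; apply: hal => //; apply: Pc.
have cm : connect R' x (c (z m)) by apply: (connect_trans (cA m (leqnn m))); apply: connect1; apply: hc.
case/orP: Qm => /eqP Qm; last by rewrite -Qm.
exfalso.
have B k : k <= m -> z (m - k) = c (z k).
  elim: k => [|k IH] lt; first by rewrite subn0 -[z 0]/x -Qm ci.
  have e1 : m - k = (m - k.+1).+1 by lia.
  have := IH (ltnW lt); rewrite e1 zS => h.
  by rewrite -[z (m - k.+1)]ci -[c (z (m - k.+1))]ali h zS.
have hm := odd_double_half m.
case: (odd m) hm => /= hm.
- have := B (m./2) (ltac:(lia)); have -> : m - m./2 = (m./2).+1 by lia.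
  rewrite zS => h; by move: (alf (c (z m./2))); rewrite h eqxx.
- have := B (m./2) (ltac:(lia)); have -> : m - m./2 = m./2 by lia.
  move=> h; by move: (cf (z m./2)); rewrite -h eqxx.
Qed.

Inductive code := CA | CB | CC.

Definition sel (E : finType) (G : ribgraph E) (k : code) (x : Flag E) : Flag E :=
  match k with CA => ra G x | CB => rb G x | CC => ra G (rb G x) end.

Definition third (a b : code) : code :=
  match a, b with
  | CA, CB | CB, CA => CC
  | CA, CC | CC, CA => CB
  | _, _ => CA end.

Definition nxt (a : code) : code := match a with CA => CB | CB => CC | CC => CA end.

Lemma nxt_neq a : a <> nxt a. Proof. by case: a. Qed.

Lemma code3 a b c : a <> b -> c = a \/ c = b \/ c = third a b.
Proof. by case: a; case: b; case: c; auto. Qed.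

Lemma sel_edge E (G : ribgraph E) k x : is_ribbon G -> fedge (sel G k x) = fedge x.
Proof.
case=> [ai [bi [ci [af [bf [cf [ae [be [ab abf]]]]]]]]].
by case: k => //=; rewrite ae be.
Qed.

Lemma sel_inv E (G : ribgraph E) k x : is_ribbon G -> sel G k (sel G k x) = x.
Proof.
case=> [ai [bi [ci [af [bf [cf [ae [be [ab abf]]]]]]]]].
by case: k => //=; rewrite -ab bi ai.
Qed.

Lemma sel_fpf E (G : ribgraph E) k x : is_ribbon G -> sel G k x != x.
Proof.
case=> [ai [bi [ci [af [bf [cf [ae [be [ab abf]]]]]]]]].
by case: k => //=.
Qed.

Lemma sel_comp E (G : ribgraph E) k k' x : is_ribbon G -> k <> k' ->
  sel G k (sel G k' x) = sel G (third k k') x.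
Proof.
case=> [ai [bi [ci [af [bf [cf [ae [be [ab abf]]]]]]]]].
case: k; case: k' => //= _; by rewrite ?ai ?bi ?ab ?ai.
Qed.

Lemma flags4 E (G : ribgraph E) x y : is_ribbon G -> fedge y = fedge x ->
  [\/ y = x, y = sel G CA x, y = sel G CB x | y = sel G CC x].
Proof.
move=> rib; have := rib.
case=> [ai [bi [ci [af [bf [cf [ae [be [ab abf]]]]]]]]] ey.
case: (boolP (y \in [:: x; ra G x; rb G x; ra G (rb G x)])).
  rewrite !inE => /or4P [] /eqP ->; [by constructor 1|by constructor 2|by constructor 3|by constructor 4].
move=> yn; exfalso.
set s := y :: [:: x; ra G x; rb G x; ra G (rb G x)].
have us : uniq s.
  rewrite /s cons_uniq yn /= !inE !negb_or.
  have h1 := af x; have h2 := bf x; have h3 := abf x.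
  have h4 : ra G x != rb G x by apply: contra h3 => /eqP <-; rewrite ai.
  have h5 : ra G x != ra G (rb G x) by apply: contra h2 => /eqP /(inv_inj ai) h; rewrite -h.
  have h6 : rb G x != ra G (rb G x) by rewrite eq_sym af.
  by rewrite !(eq_sym x) h1 h2 h3 h4 h5 h6.
pose S := [set z : Flag E | fedge z == fedge x].
have sub : {subset s <= S}.
  move=> z; rewrite /s !inE => /orP [/eqP ->|/or4P [] /eqP ->]; by rewrite ?ey ?ae ?be.
have c1 : 5 <= #|S| by apply/card_geqP; exists s.
have c2 : #|S| <= 4.
  have inj : {in S &, injective (fun z : Flag E => (z.1.2, z.2))}.
    move=> [[e1 p1] q1] [[e2 p2] q2]; rewrite !inE /fedge /= => /eqP -> /eqP -> [-> ->] //.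
  rewrite -(card_in_imset inj).
  apply: (leq_trans (max_card _)); by rewrite card_prod card_bool.
by have := leq_trans c1 c2.
Qed.

Definition ca (n : nat) : code :=
  match n with 0 => CA | 1 => CB | 2 => CA | 3 => CB | _ => CC end.
Definition cb (n : nat) : code :=
  match n with 0 => CB | 1 => CA | 2 => CC | 3 => CC | 4 => CA | _ => CB end.
Definition dS (n : nat) : nat :=
  match n with 0 => 1 | 1 => 0 | 2 => 4 | 3 => 5 | 4 => 2 | _ => 3 end.
Definition tS (n : nat) : nat :=
  match n with 0 => 2 | 1 => 3 | 2 => 0 | 3 => 1 | 4 => 5 | _ => 4 end.

Lemma ca_dS n : ca (dS n) = cb n. Proof. by do 6?case: n => [|n] //. Qed.
Lemma cb_dS n : cb (dS n) = ca n. Proof. by do 6?case: n => [|n] //. Qed.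
Lemma ca_tS n : ca (tS n) = ca n. Proof. by do 6?case: n => [|n] //. Qed.
Lemma cb_tS n : cb (tS n) = third (ca n) (cb n). Proof. by do 6?case: n => [|n] //. Qed.
Lemma ca_cb n : ca n <> cb n. Proof. by do 6?case: n => [|n] //. Qed.

Definition mk (E : finType) (G : ribgraph E) (g : E -> nat) : ribgraph E :=
  RGraph (fun x => sel G (ca (g (fedge x))) x) (fun x => sel G (cb (g (fedge x))) x)
         (rc G) (riso G).

Lemma G_mk (E : finType) (G : ribgraph E) : G = mk G (fun _ => 0).
Proof. by case: G. Qed.

Lemma op_d (E : finType) (G : ribgraph E) A g :
  pdual A (mk G g) = mk G (fun e => if e \in A then dS (g e) else g e).
Proof.
rewrite /pdual /mk /=; congr RGraph; apply: functional_extensionality => x;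
  by case: (fedge x \in A); rewrite ?ca_dS ?cb_dS.
Qed.

Lemma op_t (E : finType) (G : ribgraph E) A g : is_ribbon G ->
  ppetrial A (mk G g) = mk G (fun e => if e \in A then tS (g e) else g e).
Proof.
move=> rib; rewrite /ppetrial /mk /=; congr RGraph; apply: functional_extensionality => x.
  by case: (fedge x \in A); rewrite ?ca_tS.
case: (fedge x \in A) => //.
by rewrite sel_edge // sel_comp // ?cb_tS //; apply: ca_cb.
Qed.

Definition opS (l : letter) (n : nat) := match l with Ld => dS n | Lt => tS n end.
Definition wS (w : word) (n : nat) := foldr opS n w.

Lemma applyw_mk (E : finType) (G : ribgraph E) w A g : is_ribbon G ->
  applyw w A (mk G g) = mk G (fun e => if e \in A then wS w (g e) else g e).
Proof.
move=> rib; elim: w => [|l w IH] /=.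
  by congr mk; apply: functional_extensionality => e; case: (e \in A).
rewrite /applyw /= -/(applyw w A (mk G g)) IH.
case: l => /=; [rewrite op_d|rewrite op_t //]; congr mk;
  apply: functional_extensionality => e; by case: (e \in A).
Qed.

Definition stepf (E : finType) (g : E -> nat) (p : word * {set E}) : E -> nat :=
  fun e => if e \in p.2 then wS p.1 (g e) else g e.

Lemma applyseq_mk (E : finType) (G : ribgraph E) ps g : is_ribbon G ->
  applyseq (mk G g) ps = mk G (foldl (@stepf E) g ps).
Proof.
move=> rib; elim: ps g => [|p ps IH] g //=.
by rewrite /applyseq /= applyw_mk // -/(applyseq _ ps) IH.
Qed.

Definition hrel (T : finType) (fs : seq (T -> T)) : rel T := fun x y => has (fun f => y == f x) fs.

Lemma hrel_sym2 (T : finType) (f1 f2 : T -> T) :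
  involutive f1 -> involutive f2 -> connect_sym (hrel [:: f1; f2]).
Proof.
move=> i1 i2; apply: sym_connect_sym => x y; rewrite /hrel /=.
by rewrite !(eq_sym y) !(inv_eq i1) !(inv_eq i2).
Qed.

Lemma hrel_sym3 (T : finType) (f1 f2 f3 : T -> T) :
  involutive f1 -> involutive f2 -> involutive f3 -> connect_sym (hrel [:: f1; f2; f3]).
Proof.
move=> i1 i2 i3; apply: sym_connect_sym => x y; rewrite /hrel /=.
by rewrite !(eq_sym y) !(inv_eq i1) !(inv_eq i2) !(inv_eq i3).
Qed.

Definition alpha (E : finType) (G : ribgraph E) (g : E -> nat) (x : Flag E) :=
  sel G (ca (g (fedge x))) x.

Definition Rg (E : finType) (G : ribgraph E) (g : E -> nat) := hrel [:: alpha G g; rc G].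

Lemma nverts_mk (E : finType) (G : ribgraph E) g :
  nverts (mk G g) = n_comp (Rg G g) predT + riso G.
Proof. by []. Qed.

Lemma alpha_inv (E : finType) (G : ribgraph E) g : is_ribbon G -> involutive (alpha G g).
Proof. by move=> rib x; rewrite /alpha sel_edge // sel_inv. Qed.

Lemma alpha_fpf (E : finType) (G : ribgraph E) g x : is_ribbon G -> alpha G g x != x.
Proof. by move=> rib; rewrite /alpha sel_fpf. Qed.

Lemma alpha_edge (E : finType) (G : ribgraph E) g x : is_ribbon G -> fedge (alpha G g x) = fedge x.
Proof. by move=> rib; rewrite /alpha sel_edge. Qed.

Lemma rc_inv (E : finType) (G : ribgraph E) : is_ribbon G -> involutive (rc G).
Proof. by case=> [ai [bi [ci _]]]. Qed.

Lemma rc_fpf (E : finType) (G : ribgraph E) x : is_ribbon G -> rc G x != x.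
Proof. by case=> [ai [bi [ci [af [bf [cf _]]]]]]. Qed.

Lemma Rg_sym (E : finType) (G : ribgraph E) g : is_ribbon G -> connect_sym (Rg G g).
Proof. by move=> rib; apply: hrel_sym2; [apply: alpha_inv|apply: rc_inv]. Qed.

Lemma flags4c (E : finType) (G : ribgraph E) k k' x y : is_ribbon G -> k <> k' ->
  fedge y = fedge x ->
  [\/ y = x, y = sel G k x, y = sel G k' x | y = sel G k (sel G k' x)].
Proof.
move=> rib kk ey; rewrite sel_comp //.
have H k0 : [\/ sel G k0 x = x, sel G k0 x = sel G k x, sel G k0 x = sel G k' x
   | sel G k0 x = sel G (third k k') x].
  by case: (code3 k0 kk) => [->|[->|->]]; [constructor 2|constructor 3|constructor 4].
by case: (flags4 rib ey) => [->|->|->|->]; [constructor 1|apply: H|apply: H|apply: H].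
Qed.

Lemma alpha_e (E : finType) (G : ribgraph E) g y e :
  fedge y = e -> alpha G g y = sel G (ca (g e)) y.
Proof. by rewrite /alpha => ->. Qed.

Lemma alpha_same (E : finType) (G : ribgraph E) g g' e y :
  (forall e', e' != e -> g e' = g' e') -> fedge y != e -> alpha G g y = alpha G g' y.
Proof. by move=> h ne; rewrite /alpha h. Qed.

Lemma lip (E : finType) (G : ribgraph E) e g g' : is_ribbon G ->
  (forall e', e' != e -> g e' = g' e') ->
  (nverts (mk G g) <= nverts (mk G g') + 1)%N.
Proof.
move=> rib hg; rewrite !nverts_mk.
pose Rs := hrel [:: alpha G g; alpha G g'; rc G].
have sRs : connect_sym Rs by apply: hrel_sym3; [apply: alpha_inv|apply: alpha_inv|apply: rc_inv].
have h1 : (n_comp Rs predT <= n_comp (Rg G g') predT)%N.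
  apply: ncomp_mono; [exact: Rg_sym|exact: sRs|].
  apply: connect_sub => x y; rewrite /Rg /hrel /= => h; apply: connect1.
  by rewrite /Rs /hrel /=; case/or3P: h => ->; rewrite ?orbT.
pose u : Flag E := (e, false, false).
pose v := sel G (nxt (ca (g e))) u.
have cover : forall z, fedge z = e -> connect (Rg G g) u z || connect (Rg G g) v z.
  move=> z ez.
  case: (flags4c (k := ca (g e)) (k' := nxt (ca (g e))) (x := u) rib (@nxt_neq _) ez) => ->.
  - by rewrite connect0.
  - by apply/orP; left; apply: connect1; rewrite /Rg /hrel /= (@alpha_e _ _ _ u e (erefl _)) eqxx.
  - by rewrite connect0 orbT.
  - apply/orP; right; apply: connect1; rewrite /Rg /hrel /= (@alpha_e _ _ _ v e) ?eqxx //.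
    by rewrite /v sel_edge.
have h2 : (n_comp (Rg G g) predT <= (n_comp Rs predT).+1)%N.
  apply: (@ncomp_add _ _ _ u v); [exact: Rg_sym|exact: sRs|].
  move=> x y; rewrite /Rs /hrel /=; case/or4P => // /eqP ->.
  - by rewrite connect1 // /Rg /hrel /= eqxx.
  - case: (eqVneq (fedge x) e) => ex.
      by rewrite !cover ?orbT // alpha_edge.
    by rewrite -(alpha_same _ hg ex) connect1 // /Rg /hrel /= eqxx.
  - by rewrite connect1 // /Rg /hrel /= eqxx orbT.
lia.
Qed.

Lemma decrK (E : finType) (G : ribgraph E) e g g' p : is_ribbon G ->
  (forall e', e' != e -> g e' = g' e') -> ca (g e) <> ca (g' e) -> fedge p = e ->
  ~~ connect (Rg G g) p (sel G (ca (g' e)) p) ->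
  connect (Rg G g') p (alpha G g p).
Proof.
move=> rib hg kk ep np.
set k := ca (g e) in kk *; set k' := ca (g' e) in kk np *.
have ai := alpha_inv g rib.
apply: (@walk _ (alpha G g) (rc G) (Rg G g') (connect (Rg G g) p)).
- exact: ai.
- exact: rc_inv.
- by move=> y; apply: alpha_fpf.
- by move=> y; apply: rc_fpf.
- exact: connect0.
- move=> y py; apply: (connect_trans py); apply: connect1; by rewrite /Rg /hrel /= eqxx orbT.
- move=> y py; apply: (connect_trans py); apply: connect1; by rewrite /Rg /hrel /= eqxx.
- by move=> y _; rewrite /Rg /hrel /= eqxx orbT.
move=> y py n1 n2.
case: (eqVneq (fedge y) e) => ey; last first.
  by rewrite (alpha_same _ hg ey) /Rg /hrel /= eqxx.
have eyp : fedge y = fedge p by rewrite ey ep.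
case: (flags4c rib kk eyp) => hy.
- by rewrite hy eqxx in n1.
- by rewrite hy -(@alpha_e _ _ g p e ep) eqxx in n2.
- by rewrite hy in py; rewrite py in np.
- exfalso; move/negP: np; apply.
  apply: (connect_trans py); apply: connect1; rewrite /Rg /hrel /= hy.
  rewrite (@alpha_e _ _ _ _ e) ?sel_inv ?eqxx //.
  by rewrite !sel_edge.
Qed.

Lemma decr (E : finType) (G : ribgraph E) e g g' x : is_ribbon G ->
  (forall e', e' != e -> g e' = g' e') -> ca (g e) <> ca (g' e) -> fedge x = e ->
  ~~ connect (Rg G g) x (sel G (ca (g' e)) x) ->
  (nverts (mk G g') < nverts (mk G g))%N.
Proof.
move=> rib hg kk ex nx; rewrite !nverts_mk.
set k := ca (g e) in kk *; set k' := ca (g' e) in kk nx *.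
pose Rs := hrel [:: alpha G g; alpha G g'; rc G].
have sRs : connect_sym Rs by apply: hrel_sym3; [apply: alpha_inv|apply: alpha_inv|apply: rc_inv].
have h1 : (n_comp Rs predT < n_comp (Rg G g) predT)%N.
  apply: (@ncomp_strict _ _ _ x (sel G k' x)); [exact: Rg_sym|exact: sRs| | |exact: nx].
    apply: connect_sub => a b; rewrite /Rg /hrel /= => h; apply: connect1.
    by rewrite /Rs /hrel /=; case/or3P: h => ->; rewrite ?orbT.
  by apply: connect1; rewrite /Rs /hrel /= (@alpha_e _ _ g' x e) // eqxx orbT.
have x'e : fedge (sel G k' x) = e by rewrite sel_edge.
have K1 := decrK rib hg kk ex nx.
have K2 : connect (Rg G g') (sel G k' x) (alpha G g (sel G k' x)).
  apply: (decrK rib hg kk x'e); rewrite -/k' sel_inv //.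
  by rewrite (Rg_sym g rib).
have syg' := Rg_sym g' rib.
have h2 : (n_comp (Rg G g') predT <= n_comp Rs predT)%N.
  apply: ncomp_mono; [exact: sRs|exact: syg'|].
  apply: connect_sub => a b; rewrite /Rs /hrel /=; case/or4P => // /eqP ->; last first.
  - by apply: connect1; rewrite /Rg /hrel /= eqxx orbT.
  - by apply: connect1; rewrite /Rg /hrel /= eqxx.
  case: (eqVneq (fedge a) e) => ea; last first.
    by rewrite (alpha_same _ hg ea); apply: connect1; rewrite /Rg /hrel /= eqxx.
  have eax : fedge a = fedge x by rewrite ea ex.
  case: (flags4c rib kk eax) => ->.
  - exact: K1.
  - rewrite -(@alpha_e _ _ g x e ex) (alpha_inv g rib) syg'; exact: K1.
  - exact: K2.
  - rewrite -(@alpha_e _ _ g (sel G k' x) e) // (alpha_inv g rib) syg'; exact: K2.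
lia.
Qed.

Lemma bound1 (E : finType) (G : ribgraph E) g : is_ribbon G -> rconnected G ->
  (forall x, exists2 k, k <> ca (g (fedge x)) & connect (Rg G g) x (sel G k x)) ->
  (nverts (mk G g) <= 1)%N.
Proof.
move=> rib conn hx; rewrite nverts_mk -conn /ncomps /nverts /norbits.
rewrite leq_add2r.
have rib' := rib; case: rib' => [ai [bi [ci _]]].
apply: ncomp_mono; [exact: hrel_sym3|exact: Rg_sym|].
have all_k : forall x k0, connect (Rg G g) x (sel G k0 x).
  move=> x k0; case: (hx x) => k nk cx.
  case: (code3 k0 (nesym nk)) => [->|[->|->]].
  - by apply: connect1; rewrite /Rg /hrel /= eqxx.
  - exact: cx.
  - rewrite -sel_comp //; last exact: nesym.
    apply: (connect_trans cx); apply: connect1; rewrite /Rg /hrel /= /alpha sel_edge //.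
    by rewrite eqxx.
apply: connect_sub => x y; rewrite /hrel /=; case/or4P => // /eqP ->.
- exact: (all_k x CA).
- exact: (all_k x CB).
- by apply: connect1; rewrite /Rg /hrel /= eqxx orbT.
Qed.

Lemma ge1 (E : finType) (G : ribgraph E) g : is_ribbon G -> rconnected G -> (1 <= nverts (mk G g))%N.
Proof.
move=> rib conn; rewrite nverts_mk.
case: (boolP [exists x : Flag E, true]) => [/existsP[x _]|].
  rewrite addn_gt0; apply/orP; left.
  rewrite ncompE card_gt0; apply/set0Pn.
  by exists (root (Rg G g) x); rewrite inE (fingraph.root_root (Rg_sym g rib)).
rewrite negb_exists => /forallP none.
have e0 : forall (r : rel (Flag E)), n_comp r predT = 0%N.
  by move=> r; rewrite ncompE; apply: eq_card0 => y; move: (none y).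
by move: conn; rewrite /rconnected /ncomps /norbits e0 e0 add0n => ->.
Qed.

Lemma exists_one (E : finType) (G : ribgraph E) s1 : is_ribbon G -> rconnected G ->
  ca s1 <> CA -> exists T : {set E}, nverts (mk G (fun e => if e \in T then s1 else 0)) = 1%N.
Proof.
move=> rib conn hs1.
pose gT (T : {set E}) := fun e => if e \in T then s1 else 0.
pose Fs T := nverts (mk G (gT T)).
have [T0 _ minT] := @arg_minnP _ set0 predT Fs isT.
exists T0; apply/eqP; rewrite eqn_leq (ge1 _ rib conn) andbT.
rewrite leqNgt; apply/negP => big.
pose alt e := if e \in T0 then CA else ca s1.
have altn : forall e, alt e <> ca (gT T0 e).
  by move=> e; rewrite /alt /gT; case: (e \in T0) => //=; apply: nesym.
case: (boolP [forall x, connect (Rg G (gT T0)) x (sel G (alt (fedge x)) x)]).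
  move/forallP => hall.
  have := bound1 rib conn (g := gT T0) (fun x => ex_intro2 _ _ (alt (fedge x)) (altn _) (hall x)).
  by rewrite -/(Fs T0) leqNgt big.
rewrite negb_forall => /existsP [x nx].
set e := fedge x in nx.
pose T1 := if e \in T0 then T0 :\ e else e |: T0.
have hg : forall e', e' != e -> gT T0 e' = gT T1 e'.
  move=> e' ne; rewrite /gT /T1; case: (e \in T0); rewrite !inE (negbTE ne) //.
have ca1 : ca (gT T1 e) = alt e.
  by rewrite /gT /T1 /alt; case: (boolP (e \in T0)) => he; rewrite !inE ?eqxx ?he.
have kk : ca (gT T0 e) <> ca (gT T1 e) by rewrite ca1; apply: nesym; apply: altn.
have := decr rib hg kk (erefl e) (x := x).
rewrite ca1 => /(_ nx) lt.
by have := minT T1 isT; rewrite leqNgt /Fs lt.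
Qed.

Import GRing.Theory Num.Theory.
Local Open Scope ring_scope.

Lemma card_setE (E : finType) : #|{set E}| = (2 ^ #|E|)%N.
Proof. by rewrite -(cardsT {set E}) -powersetT card_powerset cardsT. Qed.

Lemma sum_at1 (X : finType) (F : X -> nat) :
  (\sum_(x : X) 'X^(F x) : {poly int}).[1] = (#|X|)%:R.
Proof.
rewrite horner_sum (eq_bigr (fun _ => 1)); first by rewrite sumr_const.
by move=> x _; rewrite hornerXn expr1n.
Qed.

Lemma coef_sumX (X : finType) (F : X -> nat) k :
  (\sum_(x : X) 'X^(F x) : {poly int})`_k = (\sum_(x : X) (F x == k : nat))%:R.
Proof.
rewrite coef_sum natr_sum; apply: eq_bigr => x _; by rewrite coefXn eq_sym.
Qed.

Lemma coef_sumX_neq0 (X : finType) (F : X -> nat) k :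
  (\sum_(x : X) 'X^(F x) : {poly int})`_k != 0 <-> exists x, F x = k.
Proof.
rewrite coef_sumX pnatr_eq0; split.
  move=> h; case: (boolP [exists x, F x == k]) => [/existsP[x /eqP hx]|]; first by exists x.
  rewrite negb_exists => /forallP hn; move: h; rewrite big1 //.
  by move=> x _; rewrite (negbTE (hn x)).
case=> x hx; rewrite (bigD1 x) //= hx eqxx; by [].
Qed.

Lemma poly_interp (X : finType) (F : X -> nat) :
  (forall x, (1 <= F x)%N) -> (exists x, F x = 1%N) ->
  (forall k y, (1 <= k <= F y)%N -> exists x, F x = k) ->
  mindeg1 (\sum_x 'X^(F x)) /\ interpolating (\sum_x 'X^(F x)).
Proof.
move=> ge1 [x1 h1] ivt; split; [split|].
- apply/eqP; apply: contraT => /coef_sumX_neq0 [x hx]; by move: (ge1 x); rewrite hx.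
- by apply/coef_sumX_neq0; exists x1.
move=> k /andP[k1 ks]; apply/coef_sumX_neq0.
case: (boolP [exists y, (k <= F y)%N]) => [/existsP[y hy]|].
  by apply: (ivt k y); rewrite k1 hy.
rewrite negb_exists => /forallP hn; exfalso.
have : (size ((\sum_x 'X^(F x))%R : {poly int}) <= k)%N.
  apply/leq_sizeP => j kj; apply/eqP; apply: contraT => /coef_sumX_neq0 [y hy].
  by move: (hn y); rewrite hy kj.
move: ks k1; lia.
Qed.

Lemma ivt_gen (X : Type) (F : X -> nat) (d : X -> nat) (y : X) :
  (forall x, d x = 0%N -> F x = F y) ->
  (forall x, (0 < d x)%N -> exists z, (d z < d x)%N /\ (F z <= F x + 1)%N) ->
  forall x k, (F x <= k <= F y)%N -> exists z, F z = k.
Proof.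
move=> d0 step x k; move: {2}(d x) (leqnn (d x)) => n; elim: n x => [|n IH] x dx hk.
  have : d x = 0%N by lia.
  move/d0 => e; exists x; move: hk; rewrite e; lia.
case: (posnP (d x)) => [/d0 e|dpos]; first by exists x; move: hk; rewrite e; lia.
case: (step x dpos) => z [dz fz].
case: (leqP (F z) k) => hz.
  apply: (IH z); [lia|by rewrite hz; case/andP: hk].
by exists x; move: hk fz hz; lia.
Qed.

Lemma ivt_set (E : finType) (F : {set E} -> nat) :
  (forall (A B : {set E}) (e : E), (forall e', e' != e -> (e' \in A) = (e' \in B)) -> (F B <= F A + 1)%N) ->
  forall A y k, (F A <= k <= F y)%N -> exists z, F z = k.
Proof.
move=> lip A y k hk; apply: (@ivt_gen _ F (fun A0 : {set E} => #|[set e | (e \in A0) != (e \in y)]|) y _ _ A k hk).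
  move=> x /eqP; rewrite cards_eq0 => /eqP h; congr F; apply/setP => e.
  apply/eqP; apply: contraT => ne.
  have : e \in [set e | (e \in x) != (e \in y)] by rewrite inE.
  by rewrite h inE.
move=> x; rewrite card_gt0 => /set0Pn [e]; rewrite inE => he.
pose z := if e \in x then x :\ e else e |: x.
have mz : forall e', e' \in z = if e' == e then ~~ (e \in x) else e' \in x.
  move=> e'; rewrite /z; case: (boolP (e \in x)) => hx; rewrite !inE; case: eqP => [->|_] //=; by rewrite ?eqxx ?hx.
clearbody z.
exists z; split.
  apply: proper_card; apply/properP; split.
    apply/subsetP => e'; rewrite !inE mz; case: (eqVneq e' e) => [->|//].
    by case: (e \in x) he; case: (e \in y).
  by exists e; rewrite !inE // mz eqxx; case: (e \in x) he => /=; case: (e \in y).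
apply: (lip _ _ e) => e' ne; rewrite mz; by rewrite (negbTE ne).
Qed.

Lemma ivt_ffun (E : finType) n (F : {ffun E -> 'I_n} -> nat) :
  (forall (f f' : {ffun E -> 'I_n}) (e : E), (forall e', e' != e -> f e' = f' e') -> (F f' <= F f + 1)%N) ->
  forall f y k, (F f <= k <= F y)%N -> exists z, F z = k.
Proof.
move=> lip f y k hk; apply: (@ivt_gen _ F (fun f0 : {ffun E -> 'I_n} => #|[set e | f0 e != y e]|) y _ _ f k hk).
  move=> x /eqP; rewrite cards_eq0 => /eqP h; congr F; apply/ffunP => e.
  apply/eqP; apply: contraT => ne.
  have : e \in [set e | x e != y e] by rewrite inE.
  by rewrite h inE.
move=> x; rewrite card_gt0 => /set0Pn [e]; rewrite inE => he.
pose z := [ffun e' => if e' == e then y e else x e'].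
exists z; split.
  apply: proper_card; apply/properP; split.
    apply/subsetP => e'; rewrite !inE /z ffunE; case: (eqVneq e' e) => [->|//].
    by rewrite eqxx.
  by exists e; rewrite !inE /z ?ffunE ?eqxx.
apply: (lip _ _ e) => e' ne; by rewrite /z ffunE (negbTE ne).
Qed.

Import GRing.Theory Num.Theory.

Definition word3 (j : nat) : word :=
  match j with 0 => [::] | 1 => [:: Lt; Ld] | _ => [:: Ld; Lt] end.
Definition word6 (j : nat) : word :=
  match j with 0 => [::] | 1 => [:: Ld] | 2 => [:: Lt] | 3 => [:: Lt; Ld]
  | 4 => [:: Ld; Lt] | _ => tdt end.

Lemma orbD_mk (E : finType) (G : ribgraph E) g A : is_ribbon G ->
  orbD (mk G g) A = mk G (fun e => if e \in A then dS (g e) else g e).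
Proof. by move=> rib; rewrite /orbD applyw_mk. Qed.

Lemma orbTDT_mk (E : finType) (G : ribgraph E) g A : is_ribbon G ->
  orbTDT (mk G g) A = mk G (fun e => if e \in A then wS tdt (g e) else g e).
Proof. by move=> rib; rewrite /orbTDT applyw_mk. Qed.

Lemma orbDT_mk (E : finType) (G : ribgraph E) g f : is_ribbon G ->
  orbDT (mk G g) f = mk G (fun e => wS (word3 (f e)) (g e)).
Proof.
move=> rib; rewrite /orbDT applyseq_mk //; congr mk; apply: functional_extensionality => e.
rewrite /= /stepf /= /part !inE.
by case: (f e) => [[|[|[|j]]] hj].
Qed.

Lemma orbALL_mk (E : finType) (G : ribgraph E) g f : is_ribbon G ->
  orbALL (mk G g) f = mk G (fun e => wS (word6 (f e)) (g e)).
Proof.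
move=> rib; rewrite /orbALL applyseq_mk //; congr mk; apply: functional_extensionality => e.
rewrite /= /stepf /= /part !inE.
by case: (f e) => [[|[|[|[|[|[|j]]]]]] hj].
Qed.

Local Open Scope ring_scope.

Lemma reindex_set (E : finType) (F : (E -> nat) -> nat) (sw : nat -> nat) s1 (A0 : {set E}) :
  sw 0%N = s1 -> sw s1 = 0%N ->
  \sum_(B : {set E}) 'X^(F (fun e => if e \in B then s1 else 0%N)) =
  \sum_(B : {set E}) 'X^(F (fun e => if e \in B then sw (if e \in A0 then s1 else 0%N)
                                     else (if e \in A0 then s1 else 0%N))) :> {poly int}.
Proof.
move=> h0 h1.
pose h (B : {set E}) := (B :\: A0) :|: (A0 :\: B).
have hK : involutive h.
  by move=> B; apply/setP => e; rewrite /h !inE; case: (e \in A0); case: (e \in B).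
rewrite (reindex_inj (inv_inj hK)); apply: eq_bigr => B _; congr ('X^(F _)).
apply: functional_extensionality => e; rewrite /h !inE.
by case: (e \in A0); case: (e \in B).
Qed.

Lemma reindex_ff (E : finType) n (F : (E -> nat) -> nat) (st : nat -> nat -> nat)
    (m : nat -> nat -> nat) (f0 : {ffun E -> 'I_n}) :
  (forall i j, (i < n)%N -> (j < n)%N -> (m i j < n)%N) ->
  (forall i j1 j2, (i < n)%N -> (j1 < n)%N -> (j2 < n)%N -> m i j1 = m i j2 -> j1 = j2) ->
  (forall i j, (i < n)%N -> (j < n)%N -> st (m i j) 0%N = st j (st i 0%N)) ->
  \sum_(f : {ffun E -> 'I_n}) 'X^(F (fun e => st (f e) 0%N)) =
  \sum_(f : {ffun E -> 'I_n}) 'X^(F (fun e => st (f e) (st (f0 e) 0%N))) :> {poly int}.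
Proof.
move=> mlt minj mst.
pose h (f : {ffun E -> 'I_n}) : {ffun E -> 'I_n} :=
  [ffun e => Ordinal (mlt (f0 e) (f e) (ltn_ord _) (ltn_ord _))].
have hinj : injective h.
  move=> f1 f2 /ffunP hf; apply/ffunP => e; move: (hf e); rewrite !ffunE => [[]] /minj.
  by move=> H; apply: val_inj; apply: H.
rewrite (reindex_inj hinj); apply: eq_bigr => f _; congr ('X^(F _)).
by apply: functional_extensionality => e; rewrite ffunE /= mst.
Qed.

Lemma nverts_ca (E : finType) (G : ribgraph E) g g' :
  (forall e, ca (g e) = ca (g' e)) -> nverts (mk G g) = nverts (mk G g').
Proof.
move=> h; rewrite /nverts /mk /=.
have -> : (fun x => sel G (ca (g (fedge x))) x) = (fun x => sel G (ca (g' (fedge x))) x).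
  by apply: functional_extensionality => x; rewrite h.
by [].
Qed.

Lemma PD_mk (E : finType) (G : ribgraph E) g : is_ribbon G ->
  P_D (mk G g) = \sum_(A : {set E}) 'X^(nverts (mk G (fun e => if e \in A then dS (g e) else g e))).
Proof. by move=> rib; apply: eq_bigr => A _; rewrite orbD_mk. Qed.

Lemma PTDT_mk (E : finType) (G : ribgraph E) g : is_ribbon G ->
  P_TDT (mk G g) = \sum_(A : {set E}) 'X^(nverts (mk G (fun e => if e \in A then wS tdt (g e) else g e))).
Proof. by move=> rib; apply: eq_bigr => A _; rewrite orbTDT_mk. Qed.

Lemma PDT_mk (E : finType) (G : ribgraph E) g : is_ribbon G ->
  P_DT (mk G g) = \sum_(f : {ffun E -> 'I_3}) 'X^(nverts (mk G (fun e => wS (word3 (f e)) (g e)))).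
Proof. by move=> rib; apply: eq_bigr => f _; rewrite orbDT_mk. Qed.

Lemma PALL_mk (E : finType) (G : ribgraph E) g : is_ribbon G ->
  P_ALL (mk G g) = \sum_(f : {ffun E -> 'I_6}) 'X^(nverts (mk G (fun e => wS (word6 (f e)) (g e)))).
Proof. by move=> rib; apply: eq_bigr => f _; rewrite orbALL_mk. Qed.

Lemma part2 (E : finType) (G : ribgraph E) : is_ribbon G ->
  ((forall A : {set E}, P_D G = P_D (orbD G A)) /\
   (forall f : {ffun E -> 'I_3}, P_DT G = P_DT (orbDT G f)) /\
   (forall A : {set E}, P_TDT G = P_TDT (orbTDT G A)) /\
   (forall f : {ffun E -> 'I_6}, P_ALL G = P_ALL (orbALL G f))).
Proof.
move=> rib.
split; [|split; [|split]].
- move=> A0; rewrite (G_mk G) (orbD_mk _ _ rib) !(PD_mk _ rib).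
  exact: (@reindex_set E (fun g => nverts (mk G g)) dS 1%N A0).
- move=> f0; rewrite (G_mk G) (orbDT_mk _ _ rib) !(PDT_mk _ rib).
  apply: (@reindex_ff E 3 (fun g => nverts (mk G g)) (fun j s => wS (word3 j) s)
            (fun i j => (i + j) %% 3)%N f0).
  + by move=> i j _ _; rewrite ltn_mod.
  + by move=> i j1 j2; case: i => [|[|[|i]]] //; case: j1 => [|[|[|j1]]] //; case: j2 => [|[|[|j2]]].
  + by move=> i j; case: i => [|[|[|i]]] //; case: j => [|[|[|j]]].
- move=> A0; rewrite (G_mk G) (orbTDT_mk _ _ rib) !(PTDT_mk _ rib).
  exact: (@reindex_set E (fun g => nverts (mk G g)) (wS tdt) 5%N A0).
- move=> f0; rewrite (G_mk G) (orbALL_mk _ _ rib) !(PALL_mk _ rib).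
  apply: (@reindex_ff E 6 (fun g => nverts (mk G g)) (fun j s => wS (word6 j) s)
            (fun i j => wS (word6 j) i) f0).
  + move=> i j; case: i => [|[|[|[|[|[|i]]]]]] //; case: j => [|[|[|[|[|[|j]]]]]] //.
  + move=> i j1 j2 hi h1 h2 /(f_equal (fun s => index s [seq wS (word6 j) i | j <- iota 0 6])).
    have K : forall j, (j < 6)%N -> index (wS (word6 j) i) [seq wS (word6 j) i | j <- iota 0 6] = j.
      by move=> j; case: i hi => [|[|[|[|[|[|i]]]]]] //; case: j => [|[|[|[|[|[|j]]]]]].
    by rewrite !K.
  + move=> i j; case: i => [|[|[|[|[|[|i]]]]]] //; case: j => [|[|[|[|[|[|j]]]]]] //.
Qed.

Lemma part3set (E : finType) (G : ribgraph E) s1 : is_ribbon G -> rconnected G -> ca s1 <> CA ->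
  let p := \sum_(A : {set E}) 'X^(nverts (mk G (fun e => if e \in A then s1 else 0%N))) : {poly int} in
  mindeg1 p /\ interpolating p.
Proof.
move=> rib conn hs1 p.
pose FD (A : {set E}) := nverts (mk G (fun e => if e \in A then s1 else 0%N)).
have lipD : forall (A B : {set E}) (e : E), (forall e', e' != e -> (e' \in A) = (e' \in B)) ->
    (FD B <= FD A + 1)%N.
  move=> A B e h; apply: (@lip _ G e _ _ rib) => e' ne; by rewrite h.
have [T hT] := exists_one rib conn hs1.
apply: (@poly_interp _ FD).
- by move=> A; apply: ge1.
- by exists T.
- move=> k y /andP[k1 ky]; apply: (ivt_set lipD (A := T) (y := y)).
  by rewrite /FD hT k1 ky.
Qed.

Lemma part3ff (E : finType) (G : ribgraph E) n (st : nat -> nat) (j1 : 'I_n.+1) :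
  is_ribbon G -> rconnected G -> st 0%N = 0%N -> ca (st j1) = CB ->
  let p := \sum_(f : {ffun E -> 'I_n.+1}) 'X^(nverts (mk G (fun e => st (f e)))) : {poly int} in
  mindeg1 p /\ interpolating p.
Proof.
move=> rib conn st0 st1 p.
pose FD (f : {ffun E -> 'I_n.+1}) := nverts (mk G (fun e => st (f e))).
have lipD : forall (f f' : {ffun E -> 'I_n.+1}) (e : E), (forall e', e' != e -> f e' = f' e') ->
    (FD f' <= FD f + 1)%N.
  move=> f f' e h; apply: (@lip _ G e _ _ rib) => e' ne; by rewrite h.
have [T hT] := @exists_one _ G 1%N rib conn (ltac:(by [])).
pose f1 : {ffun E -> 'I_n.+1} := [ffun e => if e \in T then j1 else ord0].
have hf1 : FD f1 = 1%N.
  rewrite -hT /FD; apply: nverts_ca => e; rewrite ffunE.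
  by case: (e \in T); rewrite ?st1 ?st0.
apply: (@poly_interp _ FD).
- by move=> A; apply: ge1.
- by exists f1.
- move=> k y /andP[k1 ky]; apply: (ivt_ffun lipD (f := f1) (y := y)).
  by rewrite hf1 k1 ky.
Qed.

Lemma PD_G (E : finType) (G : ribgraph E) : is_ribbon G ->
  P_D G = \sum_(A : {set E}) 'X^(nverts (mk G (fun e => if e \in A then 1%N else 0%N))).
Proof. by move=> rib; rewrite {1}(G_mk G) (PD_mk _ rib). Qed.

Lemma PTDT_G (E : finType) (G : ribgraph E) : is_ribbon G ->
  P_TDT G = \sum_(A : {set E}) 'X^(nverts (mk G (fun e => if e \in A then 5%N else 0%N))).
Proof. by move=> rib; rewrite {1}(G_mk G) (PTDT_mk _ rib). Qed.

Lemma PDT_G (E : finType) (G : ribgraph E) : is_ribbon G ->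
  P_DT G = \sum_(f : {ffun E -> 'I_3}) 'X^(nverts (mk G (fun e => wS (word3 (f e)) 0%N))).
Proof. by move=> rib; rewrite {1}(G_mk G) (PDT_mk _ rib). Qed.

Lemma PALL_G (E : finType) (G : ribgraph E) : is_ribbon G ->
  P_ALL G = \sum_(f : {ffun E -> 'I_6}) 'X^(nverts (mk G (fun e => wS (word6 (f e)) 0%N))).
Proof. by move=> rib; rewrite {1}(G_mk G) (PALL_mk _ rib). Qed.

Theorem mainTheorem5 (E : finType) (G : ribgraph E) :
  is_ribbon G -> rconnected G ->
  (* (1) *)
  ((P_D G).[1] = 2 ^+ #|E| /\ (P_TDT G).[1] = 2 ^+ #|E| /\
   (P_DT G).[1] = 3 ^+ #|E| /\ (P_ALL G).[1] = 6 ^+ #|E|) /\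
  (* (2) *)
  ((forall A : {set E}, P_D G = P_D (orbD G A)) /\
   (forall f : {ffun E -> 'I_3}, P_DT G = P_DT (orbDT G f)) /\
   (forall A : {set E}, P_TDT G = P_TDT (orbTDT G A)) /\
   (forall f : {ffun E -> 'I_6}, P_ALL G = P_ALL (orbALL G f))) /\
  (* (3) *)
  ((mindeg1 (P_D G) /\ interpolating (P_D G)) /\
   (mindeg1 (P_DT G) /\ interpolating (P_DT G)) /\
   (mindeg1 (P_TDT G) /\ interpolating (P_TDT G)) /\
   (mindeg1 (P_ALL G) /\ interpolating (P_ALL G))).
Proof.
move=> rib conn; split; [|split; [exact: part2|]].
  rewrite /P_D /P_TDT /P_DT /P_ALL !sum_at1 card_setE !card_ffun !card_ord !natrX.
  by [].
rewrite (PD_G rib) (PTDT_G rib) (PDT_G rib) (PALL_G rib).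
split; [|split; [|split]].
- exact: (part3set rib conn (s1 := 1%N)).
- exact: (@part3ff E G 2 (fun j => wS (word3 j) 0%N) (Ordinal (isT : (1 < 3)%N)) rib conn).
- exact: (part3set rib conn (s1 := 5%N)).
- exact: (@part3ff E G 5 (fun j => wS (word6 j) 0%N) (Ordinal (isT : (1 < 6)%N)) rib conn).
Qed.
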